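(* Let $\Omega\subset\mathbb R^d$ be a $d$-dimensional convex body contained in a ball of radius $R$, let $\mu$ be the uniform probability measure on $\Omega$, and let $\alpha$ be in the $\eta$-interior of $\Omega$ (i.e., the open ball of radius $\eta$ about $\alpha$ lies in $\Omega$). Then the minimizer $y^\star\in\mathbb R^d$ of $F_\alpha(y)=\langle y,\alpha\rangle+\log\int_\Omega e^{-\langle y,x\rangle}d\mu(x)$ satisfies $\|y^\star\|\le\frac{2d}{\eta}\log\frac{4R}{\eta}$.
   Context: The uniform probability measure is normalized Lebesgue measure restricted to $\Omega$; $\langle\cdot,\cdot\rangle$ and $\|\cdot\|$ are Euclidean. *)

(* Defs.v *)
From HB Require Import structures.
From mathcomp Require Import all_boot all_order all_algebra.
From mathcomp Require Import all_classical all_reals all_analysis.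
Set Implicit Arguments. Unset Strict Implicit. Unset Printing Implicit Defensive.
Import Order.TTheory GRing.Theory Num.Theory.
Import numFieldNormedType.Exports.
Local Open Scope classical_set_scope.
Local Open Scope ring_scope.

Section Defs.
Variable R : realType.

Definition dotp (d : nat) (u v : 'rV[R]_d) : R := \sum_(i < d) u 0 i * v 0 i.
Definition enorm (d : nat) (u : 'rV[R]_d) : R := Num.sqrt (dotp u u).

Definition eball (d : nat) (c : 'rV[R]_d) (r : R) : set 'rV[R]_d :=
  [set x | enorm (x - c) < r].
Definition eclosed_ball (d : nat) (c : 'rV[R]_d) (r : R) : set 'rV[R]_d :=
  [set x | enorm (x - c) <= r].

Definition convex_set (d : nat) (A : set 'rV[R]_d) : Prop :=
  forall x y (t : R), A x -> A y -> 0 <= t -> t <= 1 -> A (t *: x + (1 - t) *: y).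

Definition convex_body (d : nat) (A : set 'rV[R]_d) : Prop :=
  [/\ convex_set A, compact A & exists c r, 0 < r /\ eball c r `<=` A].

(* Integral w.r.t. d-dimensional Lebesgue measure of a nonnegative function,
   written as the iterated Lebesgue integral over R (Tonelli). *)
Fixpoint leb_int (n : nat) : ('rV[R]_n -> \bar R) -> \bar R :=
  match n return ('rV[R]_n -> \bar R) -> \bar R with
  | 0 => fun f => f 0
  | n'.+1 => fun f =>
      (\int[@lebesgue_measure R]_(t in [set: R])
         leb_int (fun v : 'rV[R]_n' => f (row_mx (const_mx t : 'rV[R]_1) v)))%E
  end.

Definition volume (d : nat) (A : set 'rV[R]_d) : \bar R :=
  leb_int (fun x => (\1_A x)%:E).

(* integral of a nonnegative g against the uniform probability measure on A *)
Definition unif_int (d : nat) (A : set 'rV[R]_d) (g : 'rV[R]_d -> R) : R :=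
  fine (leb_int (fun x => (\1_A x * g x)%:E)) / fine (volume A).

Definition F_alpha (d : nat) (Omega : set 'rV[R]_d) (alpha y : 'rV[R]_d) : R :=
  dotp y alpha + ln (unif_int Omega (fun x => expR (- dotp y x))).

End Defs.

(* Main.v *)
Require Import Defs.
From HB Require Import structures.
From mathcomp Require Import all_boot all_order all_algebra.
From mathcomp Require Import all_classical all_reals all_analysis measurable_realfun.
From mathcomp Require Import lra ring.
Import Order.TTheory GRing.Theory Num.Theory.
Local Open Scope classical_set_scope.
Local Open Scope ring_scope.

Module Helpers.
Set Implicit Arguments. Unset Strict Implicit. Unset Printing Implicit Defensive.
Import numFieldNormedType.Exports.
Section Aff.
Variable R : realType.
Local Open Scope ereal_scope.
Notation mu := (@lebesgue_measure R).
Variables (r b : R).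
Hypothesis r0 : (0 < r)%R.
Let phi : measurableTypeR R -> measurableTypeR R := fun t => (r * t + b)%R.
Let mphi : measurable_fun [set: measurableTypeR R] phi.
Proof. by apply: measurable_funD. Qed.
Let nu := fun A : set (measurableTypeR R) => mu (phi @^-1` A).
Let nu0 : nu set0 = 0.
Proof. by rewrite /nu preimage_set0 measure0. Qed.
Let nu_ge0 A : 0 <= nu A.
Proof. by []. Qed.
Let nu_sa : semi_sigma_additive nu.
Proof.
move=> F mF tF mUF; rewrite /nu preimage_bigcup.
apply: measure_semi_sigma_additive.
- by move=> n; rewrite -[X in measurable X]setTI; exact: mphi.
- apply/trivIsetP => /= i j _ _ ij; rewrite -preimage_setI.
  by move/trivIsetP : tF => /(_ _ _ _ _ ij) ->//; rewrite preimage_set0.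
- by rewrite -preimage_bigcup -[X in measurable X]setTI; exact: mphi.
Qed.
HB.instance Definition _ := isMeasure.Build _ _ _ nu nu0 nu_ge0 nu_sa.

Lemma aff_measure (A : set R) : measurable A ->
  mu A = r%:E * mu ((fun t => r * t + b)%R @^-1` A).
Proof.
move=> mA.
have := @lebesgue_measure_unique R (mscale (NngNum (ltW r0)) nu) _ A mA.
apply.
move=> X /ocitvP [->|[[x1 x2]/= x12 ->]].
  by rewrite !measure0.
rewrite /mscale /= /nu.
have -> : phi @^-1` `]x1, x2]%classic = `]((x1 - b) / r)%R, ((x2 - b) / r)%R]%classic.
  apply/seteqP; split => t /=; rewrite !in_itv /= /phi.
    move=> /andP[h1 h2]; apply/andP; split.
      by rewrite ltr_pdivrMr// ltrBlDr mulrC.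
    by rewrite ler_pdivlMr// lerBrDr mulrC.
  move=> /andP[h1 h2]; apply/andP; split.
    by move: h1; rewrite ltr_pdivrMr// ltrBlDr mulrC.
  by move: h2; rewrite ler_pdivlMr// lerBrDr mulrC.
rewrite !lebesgue_measure_itv /= !lte_fin x12.
have -> : ((x1 - b) / r < (x2 - b) / r)%R.
  by rewrite ltr_pM2r ?invr_gt0// ltrD2r.
rewrite -!EFinB -EFinM; congr EFin.
by field; rewrite gt_eqF.
Qed.
End Aff.
Section OneD.
Variable R : realType.
Local Open Scope ereal_scope.
Notation mu := (@lebesgue_measure R).
Import HBNNSimple.

Lemma int_sup (F : R -> \bar R) : (forall x, 0 <= F x) ->
  \int[mu]_(x in [set: R]) F x = ereal_sup [set sintegral mu h |
  h in [set h : {nnsfun measurableTypeR R >-> R} | forall x, (h x)%:E <= F x]].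
Proof. by move=> F0; rewrite ge0_integralTE. Qed.

Lemma le_int (F G : R -> \bar R) : (forall x, 0 <= F x) -> (forall x, F x <= G x) ->
  \int[mu]_(x in [set: R]) F x <= \int[mu]_(x in [set: R]) G x.
Proof.
move=> F0 FG; have G0 x : 0 <= G x by exact: le_trans (F0 x) (FG x).
rewrite !int_sup//.
apply: ge_ereal_sup => _ [h hF <-]; apply: ereal_sup_ubound; exists h => //.
by move=> x; exact: le_trans (hF x) (FG x).
Qed.

Lemma int_scale_le (k : R) (F : R -> \bar R) : (0 < k)%R -> (forall x, 0 <= F x) ->
  \int[mu]_(x in [set: R]) (k%:E * F x) <= k%:E * \int[mu]_(x in [set: R]) F x.
Proof.
move=> k0 F0; have kF0 x : 0 <= k%:E * F x by rewrite mule_ge0// lee_fin ltW.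
rewrite !int_sup//.
apply: ge_ereal_sup => _ [h hF <-].
have ki : (0 <= k^-1)%R by rewrite invr_ge0 ltW.
pose h' := scale_nnsfun h ki.
have -> : sintegral mu h = k%:E * sintegral mu h'.
  rewrite -sintegralrM; apply: eq_sintegral => x /=.
  by rewrite mulrA mulfV ?mul1r// gt_eqF.
rewrite lee_pmul2l//; apply: ereal_sup_ubound; exists h' => // x /=.
rewrite -(@lee_pmul2l _ k%:E)// -EFinM mulrA mulfV ?gt_eqF// mul1r; exact: hF.
Qed.

Lemma int_scale (k : R) (F : R -> \bar R) : (0 < k)%R -> (forall x, 0 <= F x) ->
  \int[mu]_(x in [set: R]) (k%:E * F x) = k%:E * \int[mu]_(x in [set: R]) F x.
Proof.
move=> k0 F0; apply/eqP; rewrite eq_le int_scale_le//=.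
have ki : (0 < k^-1)%R by rewrite invr_gt0.
have := @int_scale_le k^-1 (fun x => k%:E * F x) ki (fun x => mule_ge0 (ltW (k0 : (0%:E < k%:E)%E)) (F0 x)).
under eq_integral do rewrite muleA -EFinM mulVf ?gt_eqF// mul1e.
rewrite -(@lee_pmul2l _ k%:E)// muleA -EFinM mulfV ?gt_eqF// mul1e.
by [].
Qed.
End OneD.

Section Comp.
Variable R : realType.
Import HBNNSimple.
Variables (h : {nnsfun measurableTypeR R >-> R}) (s c : R).
Definition hcomp (t : measurableTypeR R) : R := h (s * t + c).
Lemma hcomp_meas : measurable_fun [set: measurableTypeR R] hcomp.
Proof.
have mh : measurable_fun [set: measurableTypeR R] h by [].
have mp : measurable_fun [set: measurableTypeR R] (fun t : measurableTypeR R => (s * t + c : measurableTypeR R)%R).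
  by apply: measurable_funD.
exact: (measurableT_comp mh mp).
Qed.
Lemma hcomp_fin : finite_set (range hcomp).
Proof.
apply: (@sub_finite_set _ _ (range h)); last exact: fimfunP.
by move=> _ [t _ <-]; exists (s * t + c).
Qed.
Lemma hcomp_ge0 x : 0 <= hcomp x.
Proof. exact: fun_ge0. Qed.
HB.instance Definition _ := isMeasurableFun.Build _ _ _ _ hcomp hcomp_meas.
HB.instance Definition _ := FiniteImage.Build _ _ hcomp hcomp_fin.
HB.instance Definition _ := isNonNegFun.Build _ _ hcomp hcomp_ge0.
Definition hcomp_nnsfun : {nnsfun measurableTypeR R >-> R} := hcomp.
End Comp.

Section AffInt.
Variable R : realType.
Local Open Scope ereal_scope.
Notation mu := (@lebesgue_measure R).
Import HBNNSimple.

Lemma int_aff_le (r b : R) (F : R -> \bar R) : (0 < r)%R -> (forall x, 0 <= F x) ->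
  \int[mu]_(x in [set: R]) F (r * x + b)%R <= r^-1%:E * \int[mu]_(x in [set: R]) F x.
Proof.
move=> r0 F0; rewrite !int_sup//.
apply: ge_ereal_sup => _ [h hF <-].
pose h' := hcomp_nnsfun h r^-1 (- (b / r)).
have hh' t : h t = h' (r * t + b)%R.
  rewrite /h' /hcomp_nnsfun /hcomp /=; congr (h _).
  by field; rewrite gt_eqF.
have -> : sintegral mu h = r^-1%:E * sintegral mu h'.
  rewrite !sintegralET ge0_mule_fsumr; last exact: nnsfun_mulemu_ge0.
  apply: eq_fsbigr => x _.
  have -> : h @^-1` [set x] = (fun t => r * t + b)%R @^-1` (h' @^-1` [set x]).
    by apply/seteqP; split => t /=; rewrite hh'.
  rewrite muleA (muleC r^-1%:E) -muleA; congr (_ * _).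
  rewrite (@aff_measure R r b r0 (h' @^-1` [set x])); last first.
    by apply: (@measurable_funPTI _ _ _ _ h' [set x]).

  by rewrite muleA -EFinM mulVf ?gt_eqF// mul1e.
rewrite lee_pmul2l ?lte_fin ?invr_gt0//; apply: ereal_sup_ubound; exists h' => // x /=.
have := hF (r^-1 * x - b / r)%R.
rewrite /h' /hcomp_nnsfun /hcomp /=.
have -> : (r * (r^-1 * x - b / r) + b = x)%R by field; rewrite gt_eqF.
by [].
Qed.

Lemma int_aff (r b : R) (F : R -> \bar R) : (0 < r)%R -> (forall x, 0 <= F x) ->
  \int[mu]_(x in [set: R]) F (r * x + b)%R = r^-1%:E * \int[mu]_(x in [set: R]) F x.
Proof.
move=> r0 F0; apply/eqP; rewrite eq_le int_aff_le//=.
have ri : (0 < r^-1)%R by rewrite invr_gt0.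
have := @int_aff_le r^-1 (- (b / r)) (fun x => F (r * x + b)%R) ri (fun x => F0 _).
have E x : (r * (r^-1 * x + - (b / r)) + b = x)%R by field; rewrite gt_eqF.
under eq_integral do rewrite E.
rewrite invrK => H.
rewrite -(@lee_pmul2l _ r%:E) ?lte_fin// muleA -EFinM mulfV ?gt_eqF// mul1e.
exact: H.
Qed.
End AffInt.

Section Leb.
Variable R : realType.
Local Open Scope ereal_scope.

Lemma leb_int_ge0 n (f : 'rV[R]_n -> \bar R) : (forall x, 0 <= f x) -> 0 <= leb_int f.
Proof.
elim: n f => [|n IH] f f0 /=; first exact: f0.
by apply: integral_ge0 => t _; apply: IH => v; exact: f0.
Qed.

Lemma leb_int_le n (f g : 'rV[R]_n -> \bar R) : (forall x, 0 <= f x) ->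
  (forall x, f x <= g x) -> leb_int f <= leb_int g.
Proof.
elim: n f g => [|n IH] f g f0 fg /=; first exact: fg.
apply: le_int => t; first by apply: leb_int_ge0 => v; exact: f0.
by apply: IH => v; [exact: f0|exact: fg].
Qed.

Lemma leb_int_scale n (k : R) (f : 'rV[R]_n -> \bar R) : (0 < k)%R ->
  (forall x, 0 <= f x) -> leb_int (fun x => k%:E * f x) = k%:E * leb_int f.
Proof.
elim: n f => [|n IH] f k0 f0 //=.
under eq_integral do rewrite IH//.
apply: int_scale => // t; apply: leb_int_ge0 => v; exact: f0.
Qed.

Lemma row_mx_aff n (r t : R) (v : 'rV[R]_n) (p : 'rV[R]_(1 + n)) :
  r^-1 *: (row_mx (const_mx t : 'rV_1) v - p) =
  row_mx (const_mx (r^-1 * t + (- (r^-1 * lsubmx p 0 0)))%R : 'rV_1) (r^-1 *: (v - rsubmx p)).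
Proof.
rewrite -[p in LHS]hsubmxK opp_row_mx add_row_mx scale_row_mx; congr row_mx.
apply/rowP => i; rewrite !mxE (ord1 i); ring.
Qed.

Lemma leb_int_aff n (r : R) (p : 'rV[R]_n) (f : 'rV[R]_n -> \bar R) : (0 < r)%R ->
  (forall x, 0 <= f x) ->
  leb_int (fun x => f (r^-1 *: (x - p))) = (r ^+ n)%:E * leb_int f.
Proof.
elim: n p f => [|n IH] p f r0 f0 /=.
  by rewrite expr0 mul1e (thinmx0 (_ *: _)) (thinmx0 (0%R : 'rV[R]_0)).
under eq_integral => t _.
  rewrite (_ : (fun v => f (r^-1 *: (row_mx (const_mx t : 'rV_1) v - p))) =
     (fun v => (fun w => f (row_mx (const_mx (r^-1 * t + (- (r^-1 * lsubmx (p : 'rV_(1+n)) 0 0)))%R : 'rV_1) w)) (r^-1 *: (v - rsubmx (p : 'rV_(1+n))))));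
    last by apply: funext => v; rewrite row_mx_aff.
  rewrite (IH (rsubmx (p : 'rV_(1+n))) (fun w => f (row_mx (const_mx (r^-1 * t + (- (r^-1 * lsubmx (p : 'rV_(1+n)) 0 0)))%R : 'rV_1) w)))//.
  over.
rewrite /= int_scale//; last by move=> t; apply: leb_int_ge0.
rewrite (@int_aff _ r^-1 _ (fun s => leb_int (fun w => f (row_mx (const_mx s : 'rV_1) w)))) ?invr_gt0//; last by move=> t; apply: leb_int_ge0.
  by rewrite invrK muleA -EFinM exprSr.
exact: exprn_gt0.
Qed.
End Leb.

Section Cube.
Variable R : realType.
Local Open Scope ereal_scope.

Definition cube n (p : 'rV[R]_n) (a : R) : set 'rV[R]_n :=
  [set x | forall i, (`|x 0 i - p 0 i| <= a)%R].

Lemma leb_int_cst0 n : leb_int (fun _ : 'rV[R]_n => 0 : \bar R) = 0.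
Proof. elim: n => [|n IH] //=; exact: integral0_eq. Qed.

Lemma leb_int0 n (f : 'rV[R]_n -> \bar R) : (forall x, f x = 0) -> leb_int f = 0.
Proof.
move=> f0; apply/eqP; rewrite eq_le leb_int_ge0 ?andbT; last by move=> x; rewrite f0.
have -> : 0 = leb_int (fun _ : 'rV[R]_n => 0 : \bar R) :> \bar R.
  by rewrite leb_int_cst0.
by apply: leb_int_le => x; rewrite f0.
Qed.

Lemma cube_row n (p : 'rV[R]_(1 + n)) a t (v : 'rV[R]_n) :
  cube p a (row_mx (const_mx t : 'rV_1) v) <->
  (`|t - lsubmx p 0 0| <= a)%R /\ cube (rsubmx p) a v.
Proof.
split.
  move=> H; split.
    by have := H (lshift n ord0); rewrite row_mxEl !mxE.
  by move=> j; have := H (rshift 1 j); rewrite row_mxEr !mxE.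
move=> [H1 H2] i; case: (splitP i) => j Hj.
  have -> : i = lshift n j by apply: val_inj.
  by move: H1; rewrite row_mxEl !mxE (ord1 j).
have -> : i = rshift 1 j by apply: val_inj.
by have := H2 j; rewrite row_mxEr !mxE.
Qed.

Lemma leb_int_cube n (p : 'rV[R]_n) (a : R) : (0 < a)%R ->
  leb_int (fun x => (\1_(cube p a) x)%:E) = (((2 * a) ^+ n)%R)%:E.
Proof.
elim: n p => [|n IH] p a0 /=.
  rewrite indicE expr0; have -> : (0%R : 'rV[R]_0) \in cube p a.
    by rewrite inE => i; case: i.
  by [].
pose I := `[(lsubmx (p : 'rV_(1+n)) 0 0 - a)%R, (lsubmx (p : 'rV_(1+n)) 0 0 + a)%R]%classic.
under eq_integral => t _.
  have -> : leb_int (fun v => (\1_(cube p a) (row_mx (const_mx t : 'rV_1) v))%:E) =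
      (\1_I t)%:E * (((2 * a) ^+ n)%R)%:E.
    rewrite indicE; case: (boolP (t \in I)) => tI.
      rewrite mul1e -(IH (rsubmx (p : 'rV_(1+n))))//; congr leb_int; apply: funext => v.
      rewrite !indicE; congr (EFin (nat_of_bool _)%:R).
      apply/idP/idP; rewrite !inE.
        by move=> /cube_row [].
      move=> H; apply/cube_row; split => //.
      by move: tI; rewrite inE /I /= in_itv /= ler_distl.
    rewrite mul0e; apply: leb_int0 => v; rewrite indicE.
    case: (boolP (_ \in _)) => //; rewrite inE => /cube_row [H _].
    by exfalso; move/negP: tI; apply; rewrite inE /I /= in_itv /= -ler_distl.
  over.
rewrite /=.
under eq_integral do rewrite muleC.
have k0 : (0 < (2 * a) ^+ n)%R by rewrite exprn_gt0 // mulr_gt0.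
have I0 : forall t : R, 0 <= ((\1_I t : R))%:E by move=> t; rewrite lee_fin.
rewrite (int_scale k0 I0).
rewrite integral_indic ?setIT; last exact: measurable_itv.
have HI : (@lebesgue_measure R) I = (2 * a)%:E.
  rewrite /I lebesgue_measure_itv /= lte_fin ltrD2l gtrN// -EFinD; congr EFin; ring.
rewrite [X in _ * X = _]HI -EFinM.
  by rewrite exprSr.
exact: measurableT.
Qed.
End Cube.

Section Geom.
Variable R : realType.
Local Open Scope ring_scope.
Implicit Types u v w : 'rV[R]_0.

Lemma dotpC n (u v : 'rV[R]_n) : dotp u v = dotp v u.
Proof. by apply: eq_bigr => i _; rewrite mulrC. Qed.

Lemma dotpDr n (u v w : 'rV[R]_n) : dotp u (v + w) = dotp u v + dotp u w.
Proof. by rewrite /dotp -big_split /=; apply: eq_bigr => i _; rewrite mxE mulrDr. Qed.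

Lemma dotpZr n (u v : 'rV[R]_n) k : dotp u (k *: v) = k * dotp u v.
Proof. by rewrite /dotp mulr_sumr; apply: eq_bigr => i _; rewrite mxE mulrCA. Qed.

Lemma dotpNr n (u v : 'rV[R]_n) : dotp u (- v) = - dotp u v.
Proof. by rewrite -scaleN1r dotpZr mulN1r. Qed.

Lemma dotpBr n (u v w : 'rV[R]_n) : dotp u (v - w) = dotp u v - dotp u w.
Proof. by rewrite dotpDr dotpNr. Qed.

Lemma dotp0l n (v : 'rV[R]_n) : dotp 0 v = 0.
Proof. by rewrite /dotp big1 // => i _; rewrite mxE mul0r. Qed.

Lemma dotp_ge0 n (u : 'rV[R]_n) : 0 <= dotp u u.
Proof. by apply: sumr_ge0 => i _; rewrite -expr2 sqr_ge0. Qed.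

Lemma enorm_ge0 n (u : 'rV[R]_n) : 0 <= enorm u.
Proof. exact: sqrtr_ge0. Qed.

Lemma enorm_sq n (u : 'rV[R]_n) : enorm u ^+ 2 = dotp u u.
Proof. by rewrite sqr_sqrtr // dotp_ge0. Qed.

Lemma coord_sq n (u : 'rV[R]_n) i : u 0 i ^+ 2 <= dotp u u.
Proof.
rewrite /dotp (bigD1 i) //= -expr2 lerDl; apply: sumr_ge0 => j _.
by rewrite -expr2 sqr_ge0.
Qed.

Lemma coord_le n (u : 'rV[R]_n) i : `|u 0 i| <= enorm u.
Proof. by rewrite -sqrtr_sqr /enorm ler_sqrt ?dotp_ge0 // coord_sq. Qed.

Lemma CS_sq n (u v : 'rV[R]_n) : dotp u v ^+ 2 <= dotp u u * dotp v v.
Proof.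
set A := dotp u u; set B := dotp v v; set C := dotp u v.
have B0 : 0 <= B by exact: dotp_ge0.
have [Bz|Bp] := eqVneq B 0.
  have v0 i : v 0 i = 0.
    by apply/eqP; rewrite -sqrf_eq0 eq_le sqr_ge0 andbT -Bz coord_sq.
  have -> : C = 0 by rewrite /C /dotp big1 // => i _; rewrite v0 mulr0.
  by rewrite Bz expr0n mulr0.
have Bpos : 0 < B by rewrite lt_def Bp.
have H := dotp_ge0 (B *: u - C *: v).
have E : dotp (B *: u - C *: v) (B *: u - C *: v) = B * (A * B - C ^+ 2).
  rewrite dotpBr !dotpZr (dotpC (B *: u - C *: v) u) (dotpC (B *: u - C *: v) v).
  rewrite !dotpBr !dotpZr (dotpC v u) -/A -/B -/C; ring.
have H' : 0 <= B * (A * B - C ^+ 2) by rewrite -E.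
rewrite pmulr_rge0 // subr_ge0 in H'.
exact: H'.
Qed.

Lemma CS n (u v : 'rV[R]_n) : dotp u v <= enorm u * enorm v.
Proof.
rewrite /enorm -sqrtrM ?dotp_ge0 //.
apply: (le_trans (ler_norm _)); rewrite -sqrtr_sqr ler_sqrt ?CS_sq //.
by rewrite mulr_ge0 ?dotp_ge0.
Qed.

Lemma CS_abs n (u v : 'rV[R]_n) : `|dotp u v| <= enorm u * enorm v.
Proof.
rewrite /enorm -sqrtrM ?dotp_ge0 // -sqrtr_sqr ler_sqrt ?CS_sq //.
by rewrite mulr_ge0 ?dotp_ge0.
Qed.

Lemma enorm_triangle n (u v : 'rV[R]_n) : enorm (u + v) <= enorm u + enorm v.
Proof.
rewrite {1}/enorm -(@ger0_norm _ (enorm u + enorm v)) ?addr_ge0 ?enorm_ge0 //.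
rewrite -sqrtr_sqr ler_sqrt ?sqr_ge0 //.
rewrite dotpDr (dotpC _ u) (dotpC _ v) !dotpDr (dotpC v u).
rewrite sqrrD !enorm_sq.
have := CS u v; lra.
Qed.

Lemma enormZ n (u : 'rV[R]_n) k : enorm (k *: u) = `|k| * enorm u.
Proof.
rewrite /enorm dotpZr (dotpC _ u) dotpZr mulrA -expr2 sqrtrM ?sqr_ge0 //.
by rewrite sqrtr_sqr.
Qed.

Lemma enorm0 n : enorm (0 : 'rV[R]_n) = 0.
Proof. by rewrite /enorm dotp0l sqrtr0. Qed.

Lemma enormN n (u : 'rV[R]_n) : enorm (- u) = enorm u.
Proof. by rewrite -scaleN1r enormZ normrN1 mul1r. Qed.
End Geom.

Section Misc.
Variable R : realType.

Lemma pow_bound (b e : R) n : 0 <= b -> 0 <= e -> e <= 1 ->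
  (b + e) ^+ n <= b ^+ n + e * (b + 2) ^+ n.
Proof.
move=> b0 e0 e1; elim: n => [|n IH]; first by rewrite !expr0 mulr1 lerDl.
have P0 : 0 <= (b + 2) ^+ n by rewrite exprn_ge0 // addr_ge0.
have QP : b ^+ n <= (b + 2) ^+ n by rewrite lerXn2r // ?nnegrE ?addr_ge0 // lerDl.
have X0 : 0 <= (b + e) ^+ n by rewrite exprn_ge0 // addr_ge0.
rewrite !exprS.
set X := (b + e) ^+ n in IH X0 *; set Q := b ^+ n in IH QP *; set P := (b + 2) ^+ n in IH P0 QP *.
have h1 : (b + e) * X <= (b + e) * (Q + e * P) by rewrite ler_wpM2l // addr_ge0.
have h2 : e * Q <= e * P by rewrite ler_wpM2l.
have h3 : e * e * P <= e * P.
  by rewrite -mulrA -[X in _ <= X]mul1r ler_wpM2r // mulr_ge0.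
nra.
Qed.

Lemma pow_limit (X b : R) n : 0 <= b ->
  (forall e, 0 < e -> e <= 1 -> X <= (b + e) ^+ n) -> X <= b ^+ n.
Proof.
move=> b0 H; apply/ler_addgt0Pr => e e0.
set P := (b + 2) ^+ n.
have b2 : 0 < b + 2 by lra.
have P0 : 0 < P by rewrite exprn_gt0.
set eps := Num.min 1 (e / P).
have eps0 : 0 < eps by rewrite lt_min ltr01 divr_gt0.
have eps1 : eps <= 1 by rewrite ge_min lexx.
have epsP : eps * P <= e.
  by rewrite -ler_pdivlMr // ge_min lexx orbT.
apply: (le_trans (H eps eps0 eps1)); apply: (le_trans (pow_bound n b0 (ltW eps0) eps1)).
by rewrite lerD2l.
Qed.

Local Open Scope ereal_scope.
Lemma fin_between (x : \bar R) (a b : R) : a%:E <= x -> x <= b%:E -> x = (fine x)%:E.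
Proof. by case: x. Qed.
Local Close Scope ereal_scope.

Lemma indic_le (T : Type) (A B : set T) (x : T) : A `<=` B -> (\1_A x <= \1_B x :> R).
Proof.
move=> AB; rewrite !indicE; case: (boolP (x \in A)) => [/set_mem/AB/mem_set -> //|_].
by rewrite ler0n.
Qed.

Lemma indic_ge0 (T : Type) (A : set T) (x : T) : (0 <= \1_A x :> R).
Proof. by rewrite indicE ler0n. Qed.
End Misc.

End Helpers.
Import Helpers.

Theorem mainTheorem6 (R : realType) (d : nat) (Omega : set 'rV[R]_d)
  (c : 'rV[R]_d) (Rad eta : R) (alpha ystar : 'rV[R]_d) :
  convex_body Omega ->
  Omega `<=` eclosed_ball c Rad ->
  0 < eta ->
  eball alpha eta `<=` Omega ->
  (forall y : 'rV[R]_d, F_alpha Omega alpha ystar <= F_alpha Omega alpha y) ->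
  enorm ystar <= (2 * d%:R / eta) * ln (4 * Rad / eta).
Proof.
move=> _ Osub eta0 ballO ymin.
set y := ystar; set t := enorm y.
have t0 : 0 <= t by exact: enorm_ge0.
pose om := leb_int (fun x : 'rV[R]_d => (\1_(eball 0 1) x)%:E).
have ball_vol (p : 'rV[R]_d) (r : R) : 0 < r ->
    leb_int (fun x => (\1_(eball p r) x)%:E) = ((r ^+ d)%:E * om)%E.
  move=> r0; have f0 : forall x : 'rV[R]_d, (0 <= (\1_(eball 0 1) x : R)%:E)%E by move=> x; rewrite lee_fin indic_ge0.
  rewrite /om -(@leb_int_aff R d r p _ r0 f0).
  congr leb_int; apply: funext => x; rewrite !indicE.
  have -> : (x \in eball p r) = (r^-1 *: (x - p) \in eball 0 1); last by [].
  apply/idP/idP => /set_mem H; apply/mem_set; move: H; rewrite /eball /= subr0 enormZ.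
    by rewrite ger0_norm ?invr_ge0 ?ltW // ltr_pdivrMl // mulr1.
  by rewrite ger0_norm ?invr_ge0 ?ltW // ltr_pdivrMl // mulr1.
have ind0 (A : set 'rV[R]_d) x : (0 <= (\1_A x : R)%:E)%E by rewrite lee_fin indic_ge0.
set a := ((d.+1)%:R)^-1 : R.
have a0 : 0 < a by rewrite invr_gt0 ltr0n.
have om_lo : ((((2 * a) ^+ d) : R)%:E <= om)%E.
  rewrite -(leb_int_cube 0 a0); apply: leb_int_le => // x; rewrite lee_fin.
  apply: indic_le => z /= Hz; rewrite /eball /= subr0 /enorm -sqrtr1 ltr_sqrt ?ltr01 //.
  apply: (@le_lt_trans _ _ (\sum_(i < d) a ^+ 2)).
    apply: ler_sum => i _; have := Hz i; rewrite mxE subr0 ler_norml => /andP[h1 h2].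
    rewrite -expr2; nra.
  rewrite sumr_const card_ord -mulr_natr.
  have D0 : (0 <= d%:R :> R) by rewrite ler0n.
  have aD : a * (d%:R + 1) = 1 by rewrite /a -natr1 mulVf // pnatr_eq0.
  nra.
have om_hi : (om <= (((2 * 1) ^+ d) : R)%:E)%E.
  rewrite -(leb_int_cube 0 ltr01); apply: leb_int_le => // x; rewrite lee_fin.
  apply: indic_le => z /= Hz i; rewrite mxE subr0.
  apply: le_trans (coord_le z i) _; move: Hz; rewrite /eball /= subr0; exact: ltW.
set w := fine om.
have omE : om = w%:E := fin_between om_lo om_hi.
have w0 : 0 < w.
  have : ((((2 * a) ^+ d) : R)%:E <= w%:E)%E by rewrite -omE.
  by rewrite lee_fin; apply: lt_le_trans; rewrite exprn_gt0 // mulr_gt0.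
have alpha_in : Omega alpha.
  by apply: ballO; rewrite /eball /= subrr enorm0.
have Rad0 : 0 <= Rad.
  by have := Osub _ alpha_in; rewrite /eclosed_ball /=; apply: le_trans; exact: enorm_ge0.
pose V := volume Omega.
have V_lo : (((eta ^+ d) * w)%:E <= V)%E.
  rewrite EFinM -omE -(ball_vol alpha) //; apply: leb_int_le => // x; rewrite lee_fin.
  exact: indic_le.
have V_hi eps : 0 < eps -> (V <= (((Rad + eps) ^+ d) * w)%:E)%E.
  move=> eps0; rewrite EFinM -omE -(ball_vol c) ?ltr_wpDl //.
  apply: leb_int_le => // x; rewrite lee_fin; apply: indic_le => z /Osub.
  rewrite /eclosed_ball /eball /= => h; lra.
set v := fine V.
have VE : V = v%:E := fin_between V_lo (V_hi 1 ltr01).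
have v0 : 0 < v.
  have : (((eta ^+ d) * w)%:E <= v%:E)%E by rewrite -VE.
  by rewrite lee_fin; apply: lt_le_trans; rewrite mulr_gt0 // exprn_gt0.
have F0 : F_alpha Omega alpha 0 = 0.
  rewrite /F_alpha /unif_int dotp0l add0r.
  have -> : (fun x => (\1_Omega x * expR (- dotp 0 x))%:E) = (fun x => (\1_Omega x : R)%:E).
    by apply: funext => x; rewrite dotp0l oppr0 expR0 mulr1.
  rewrite -/(volume Omega) -/V -/v divff ?gt_eqF //; exact: ln1.
have Fy := ymin 0; rewrite F0 in Fy.
pose A := leb_int (fun x => (\1_Omega x * expR (- dotp y x))%:E).
have Aint0 x : (0 <= (\1_Omega x * expR (- dotp y x))%:E)%E.
  by rewrite lee_fin mulr_ge0 ?indic_ge0 ?expR_ge0.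
set K := t * (enorm c + Rad).
have A_hi : (A <= (expR K * v)%:E)%E.
  rewrite EFinM -VE /V /volume -(leb_int_scale (expR_gt0 K) (ind0 Omega)).
  apply: leb_int_le => // x; rewrite -EFinM lee_fin !indicE.
  case: (boolP (x \in Omega)) => xO; last by rewrite !mul0r mulr0.
  rewrite mul1r mulr1 ler_expR.
  have xc : enorm x <= enorm c + Rad.
    have := Osub _ (set_mem xO); rewrite /eclosed_ball /= => h.
    have := enorm_triangle (x - c) c; rewrite subrK; lra.
  have := CS_abs y x; rewrite -/t => h.
  have := ler_wpM2l t0 xc; rewrite -/K => h2.
  have := ler_norm (- dotp y x); rewrite normrN; lra.
set k := 3 * eta / 4 / t.
set q := alpha - k *: y.
have kt : k * t ^+ 2 = 3 * eta / 4 * t.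
  have [->|tn0] := eqVneq t 0; first by rewrite expr0n mulr0 mulr0.
  by rewrite /k; field.
have kt1 : `|k| * t <= 3 * eta / 4.
  have [->|tn0] := eqVneq t 0; first by rewrite mulr0; lra.
  have tp : 0 < t by rewrite lt_def tn0 t0.
  have e34 : 0 <= 3 * eta / 4 by lra.
  rewrite ger0_norm; last by rewrite /k divr_ge0 // ltW.
  by rewrite /k mulfVK.
have inB1 x : enorm (x - q) < eta / 4 -> Omega x /\ dotp y x <= dotp y alpha - t * eta / 2.
  move=> hx; split.
    apply: ballO; rewrite /eball /=.
    have -> : x - alpha = (x - q) + (- (k *: y)) by apply/rowP => i; rewrite /q !mxE; ring.
    apply: (le_lt_trans (enorm_triangle _ _)); rewrite enormN enormZ -/t; lra.
  have E : dotp y x = dotp y alpha + dotp y (x - q) - k * dotp y y.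
    rewrite -dotpZr -dotpDr -dotpBr; congr dotp; apply/rowP => i; rewrite /q !mxE; ring.
  rewrite E.
  have yy : dotp y y = t ^+ 2 by rewrite enorm_sq.
  rewrite yy kt.
  have := CS y (x - q); rewrite -/t => h.
  have := ler_wpM2l t0 (ltW hx) => h2.
  lra.
have q0 : 0 < eta / 4 by lra.
have A_lo : ((expR (- dotp y alpha + t * eta / 2) * ((eta / 4) ^+ d * w))%:E <= A)%E.
  rewrite EFinM EFinM -omE -(ball_vol q _ q0).
  rewrite -(leb_int_scale (expR_gt0 _) (ind0 _)).
  apply: leb_int_le => x; first by rewrite -EFinM lee_fin mulr_ge0 ?indic_ge0 ?expR_ge0.
  rewrite -EFinM lee_fin indicE; case: (boolP (x \in eball q (eta / 4))) => xB.
    have [xO hd] := inB1 x (set_mem xB).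
    rewrite indicE (mem_set xO) mulr1 mul1r ler_expR; lra.
  by rewrite mulr0 mulr_ge0 ?indic_ge0 ?expR_ge0.
set aa := fine A.
have AE : A = aa%:E := fin_between A_lo A_hi.
have aa0 : 0 < aa.
  have : ((expR (- dotp y alpha + t * eta / 2) * ((eta / 4) ^+ d * w))%:E <= aa%:E)%E.
    by rewrite -AE.
  by rewrite lee_fin; apply: lt_le_trans; rewrite mulr_gt0 ?expR_gt0 // mulr_gt0 // exprn_gt0.
have FyE : F_alpha Omega alpha y = dotp y alpha + ln (aa / v) by [].
have av : 0 < aa / v by rewrite divr_gt0.
have h1 : aa / v <= expR (- dotp y alpha).
  rewrite -[aa / v]lnK ?posrE // ler_expR; lra.
have h2 : aa <= expR (- dotp y alpha) * v by rewrite -ler_pdivrMr.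
set G := expR (t * eta / 2) * (eta / 4) ^+ d.
have key eps : 0 < eps -> eps <= 1 -> G <= (Rad + eps) ^+ d.
  move=> e0 _; have := V_hi eps e0; rewrite VE lee_fin => hv.
  have hA : expR (- dotp y alpha + t * eta / 2) * ((eta / 4) ^+ d * w) <= aa.
    by rewrite -lee_fin -AE.
  rewrite expRD in hA.
  have P0 : 0 < expR (- dotp y alpha) * w by rewrite mulr_gt0 ?expR_gt0.
  rewrite -(ler_pM2l P0).
  have e1 : expR (- dotp y alpha) * w * G = expR (- dotp y alpha) * expR (t * eta / 2) * ((eta / 4) ^+ d * w) by rewrite /G; ring.
  have e2 : expR (- dotp y alpha) * w * (Rad + eps) ^+ d = expR (- dotp y alpha) * ((Rad + eps) ^+ d * w) by ring.
  rewrite e1 e2; apply: le_trans hA _; apply: le_trans h2 _.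
  by rewrite ler_wpM2l ?expR_ge0.
have G_le : G <= Rad ^+ d := pow_limit Rad0 key.
have [dz|dpos] := eqVneq d 0%N.
  move: G_le; rewrite /G dz !expr0 mulr1 expR_le1 mulr0 mul0r => h.
  have : t * eta <= 0 by lra.
  by rewrite mul0r pmulr_lle0.
have Gpos : 0 < G by rewrite mulr_gt0 ?expR_gt0 ?exprn_gt0.
have Radp : 0 < Rad.
  rewrite lt_def Rad0 andbT; apply/eqP => R0.
  by move: G_le; rewrite R0 expr0n (negbTE dpos); rewrite leNgt Gpos.
have hl : ln G <= ln (Rad ^+ d) by rewrite ler_ln ?posrE ?exprn_gt0.
have E1 : ln G = t * eta / 2 + ln (eta / 4) * d%:R.
  rewrite /G lnM; first by rewrite expRK lnXn // mulr_natr.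
    by rewrite posrE expR_gt0.
  by rewrite posrE exprn_gt0.
have E2 : ln (Rad ^+ d) = ln Rad * d%:R by rewrite lnXn // mulr_natr.
rewrite E1 E2 in hl.
have -> : 4 * Rad / eta = Rad * (eta / 4)^-1 by field; rewrite gt_eqF.
rewrite lnM ?posrE ?invr_gt0 // lnV ?posrE //.
rewrite (_ : 2 * d%:R / eta * (ln Rad - ln (eta / 4)) = (2 * d%:R * (ln Rad - ln (eta / 4))) / eta); last by field; rewrite gt_eqF.
rewrite ler_pdivlMr //.
lra.
Qed.
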